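(* Let $n\ge2$ be an integer, $j$ a positive integer, $\lambda\in\mathbb{R}$ with $\lambda\ge\frac{(n-1)j}{2}$, $\alpha=1-\frac1n$, $\beta=\frac12(1-\frac1n)-\frac{\lambda}{jn}$, and assume $\alpha-\beta-1\le1$. Let $\mathcal{G}(z)=e^{jz^n/2}\mathcal{M}(\beta,\alpha,-jz^n)$ and $\mathcal{D}(z)=e^{jz^n/2}\mathcal{T}(\beta,\alpha,-jz^n)$. There is $C_n>0$ depending only on $n$ such that for all such $j,\lambda$ and all $z\ge1$, $$C_n^{-1}e^{-\frac{jz^n}{2}}(jz^n)^{\beta-\alpha}\le\mathcal{D}(z)\le C_ne^{-\frac{jz^n}{2}}(jz^n)^{\beta-\alpha},\qquad C_n^{-1}e^{\frac{jz^n}{2}}(jz^n)^{-\beta}\le\mathcal{G}(z)\le C_ne^{\frac{jz^n}{2}}(jz^n)^{-\beta}.$$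
   Context: $(x)_k=\prod_{m=1}^k(x+m-1)$, $(x)_0=1$. $\mathcal{M}(\beta,\alpha,y)=\sum_{k\ge0}\frac{(\beta)_k}{(\alpha)_k}\frac{y^k}{k!}$. For $y<0$, $\mathcal{T}(\beta,\alpha,y)=\frac{e^y}{\Gamma(\alpha-\beta)}\int_0^\infty e^{yt}t^{\alpha-\beta-1}(1+t)^{\beta-1}dt$. *)

(* Defs.v *)
From Stdlib Require Import Reals Factorial.
From Coquelicot Require Import Coquelicot.
Open Scope R_scope.

Fixpoint poch (x : R) (k : nat) : R :=
  match k with
  | O => 1
  | S k' => poch x k' * (x + INR k')
  end.

Definition kummerM (b a y : R) : R :=
  Series (fun k => poch b k / poch a k * (y ^ k / INR (fact k))).

Definition Gamma (s : R) : R :=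
  RInt_gen (fun t => exp (- t) * Rpower t (s - 1))
           (at_right 0) (Rbar_locally p_infty).

Definition tricomiT (b a y : R) : R :=
  exp y / Gamma (a - b) *
  RInt_gen (fun t => exp (y * t) * Rpower t (a - b - 1) * Rpower (1 + t) (b - 1))
           (at_right 0) (Rbar_locally p_infty).

(* Main.v *)
Require Import Defs.
From Stdlib Require Import Reals Lra Lia Psatz Factorial.
From Coquelicot Require Import Coquelicot.
Open Scope R_scope.

Lemma poch_S_left x k : poch x (S k) = x * poch (x + 1) k.
Proof.
  induction k as [|k IH].
  - simpl. lra.
  - change (poch x (S (S k))) with (poch x (S k) * (x + INR (S k))).
    rewrite IH. change (poch (x + 1) (S k)) with (poch (x+1) k * (x + 1 + INR k)).
    rewrite S_INR. ring.
Qed.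

Lemma poch_pos x k : 0 < x -> 0 < poch x k.
Proof.
  intro Hx. induction k as [|k IH]; simpl.
  - lra.
  - apply Rmult_lt_0_compat; [exact IH|]. pose proof (pos_INR k). lra.
Qed.

Definition pr (a al : R) (k : nat) : R := poch a k / poch al k.
Definition qq (a al : R) (j : nat) : R := (-1) ^ j * pr a al j / INR (fact j).
Definition cc (m : nat) (a al : R) : R :=
  sum_f_R0 (fun j => qq a al j / INR (fact (m - j))) m.

Lemma INR_fact_pos n : 0 < INR (fact n).
Proof. apply lt_0_INR. apply lt_O_fact. Qed.

Lemma qq_S a al i : 0 < al ->
  qq a al (S i) * INR (S i) = - (a / al) * qq (a + 1) (al + 1) i.
Proof.
  intro Hal. unfold qq, pr. rewrite !poch_S_left.
  pose proof (poch_pos (al+1) i ltac:(lra)).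
  pose proof (INR_fact_pos i).
  rewrite fact_simpl, mult_INR. simpl pow.
  field. repeat split; try lra. apply not_0_INR. lia.
Qed.

Lemma cc_rec m a al : 0 < al ->
  cc (S m) a al * INR (S m) = cc m a al - (a / al) * cc m (a + 1) (al + 1).
Proof.
  intro Hal. unfold cc.
  rewrite Rmult_comm, scal_sum.
  transitivity (sum_f_R0 (fun j => qq a al j * INR (S m - j) / INR (fact (S m - j))) (S m)
              + sum_f_R0 (fun j => qq a al j * INR j / INR (fact (S m - j))) (S m)).
  { rewrite <- plus_sum. apply PartSum.sum_eq. intros i Hi.
    rewrite minus_INR by lia. rewrite S_INR.
    pose proof (INR_fact_pos (S m - i)). field. lra. }
  assert (HA : sum_f_R0 (fun j => qq a al j * INR (S m - j) / INR (fact (S m - j))) (S m)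
      = sum_f_R0 (fun j => qq a al j / INR (fact (m - j))) m).
  { rewrite tech5. rewrite Nat.sub_diag. simpl (INR 0). rewrite Rmult_0_r.
    unfold Rdiv at 2. rewrite Rmult_0_l, Rplus_0_r.
    apply PartSum.sum_eq. intros i Hi.
    replace (S m - i)%nat with (S (m - i)) by lia.
    rewrite fact_simpl, mult_INR.
    pose proof (INR_fact_pos (m - i)). field. split; [lra|]. apply not_0_INR. lia. }
  assert (HB : sum_f_R0 (fun j => qq a al j * INR j / INR (fact (S m - j))) (S m)
      = sum_f_R0 (fun i => qq (a+1) (al+1) i / INR (fact (m - i))) m * (- (a / al))).
  { rewrite decomp_sum by lia. simpl (INR 0). rewrite Rmult_0_r.
    unfold Rdiv at 1. rewrite Rmult_0_l, Rplus_0_l. simpl pred.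
    rewrite Rmult_comm, scal_sum.
    apply PartSum.sum_eq. intros i Hi.
    replace (S m - S i)%nat with (m - i)%nat by lia.
    rewrite qq_S by lra.
    pose proof (INR_fact_pos (m - i)). field. lra. }
  rewrite HA, HB. ring.
Qed.

Lemma chu m : forall a al, 0 < al ->
  cc m a al = poch (al - a) m / (poch al m * INR (fact m)).
Proof.
  induction m as [|m IH]; intros a al Hal.
  - unfold cc, qq, pr. simpl. field.
  - pose proof (cc_rec m a al Hal) as R.
    rewrite IH in R by lra. rewrite IH in R by lra.
    replace (al + 1 - (a + 1)) with (al - a) in R by ring.
    pose proof (poch_S_left al m) as E1.
    change (poch al (S m)) with (poch al m * (al + INR m)) in E1.
    pose proof (poch_pos al m Hal). pose proof (poch_pos (al+1) m ltac:(lra)).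
    pose proof (pos_INR m).
    assert (E2 : poch (al + 1) m = poch al m * (al + INR m) / al).
    { rewrite E1. field. lra. }
    rewrite E2 in R.
    change (poch (al - a) (S m)) with (poch (al - a) m * (al - a + INR m)).
    change (poch al (S m)) with (poch al m * (al + INR m)).
    rewrite fact_simpl, mult_INR.
    pose proof (INR_fact_pos m).
    assert (HS : INR (S m) <> 0) by (apply not_0_INR; lia).
    apply (Rmult_eq_reg_r (INR (S m))); [|exact HS].
    rewrite R. rewrite S_INR. field. repeat split; lra.
Qed.

Ltac toR := match goal with |- ?x = ?y => change (@eq R x y) end.

Lemma sum_n_nonneg (a : nat -> R) n : (forall k, 0 <= a k) -> 0 <= sum_n a n.
Proof.
  intro H. induction n as [|n IH].
  - rewrite sum_O. apply H.
  - rewrite sum_Sn. change (plus (sum_n a n) (a (S n))) with (sum_n a n + a (S n)).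
    pose proof (H (S n)). lra.
Qed.

Lemma term_le_series (a : nat -> R) l : (forall n, 0 <= a n) -> is_series a l ->
  forall n, a n <= l.
Proof.
  intros Hpos Hs n.
  assert (Hle : forall n, sum_n a n <= l).
  { apply is_lim_seq_incr_compare.
    - exact Hs.
    - intro k. rewrite sum_Sn. change (plus (sum_n a k) (a (S k))) with (sum_n a k + a (S k)).
      pose proof (Hpos (S k)). lra. }
  destruct n as [|n].
  - specialize (Hle O). rewrite sum_O in Hle. exact Hle.
  - specialize (Hle (S n)). rewrite sum_Sn in Hle.
    change (plus (sum_n a n) (a (S n))) with (sum_n a n + a (S n)) in Hle.
    pose proof (sum_n_nonneg a n Hpos). lra.
Qed.

Lemma radius_gt (c : nat -> R) x l :
  is_series (fun n => Rabs (c n * (Rabs x + 1) ^ n)) l ->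
  Rbar_lt (Rabs x) (CV_radius c).
Proof.
  intro Hs.
  destruct (CV_radius_bounded c) as [Hub _].
  assert (H1 : Rbar_le (Rabs x + 1) (CV_radius c)).
  { apply Hub. exists l. intro n.
    apply (term_le_series (fun n => Rabs (c n * (Rabs x + 1) ^ n))); auto.
    intro; apply Rabs_pos. }
  eapply Rbar_lt_le_trans; [|exact H1]. simpl. lra.
Qed.

Lemma exp_series_abs y : 0 <= y ->
  is_series (fun n => Rabs (/ INR (fact n) * y ^ n)) (exp y).
Proof.
  intro Hy. pose proof (is_exp_Reals y) as H. unfold is_pseries in H.
  eapply is_series_ext; [|exact H].
  intro n. toR. rewrite pow_n_pow. change (scal (y ^ n) (/ INR (fact n))) with (y ^ n * / INR (fact n)).
  rewrite Rabs_right. apply Rmult_comm.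
  apply Rle_ge. apply Rmult_le_pos.
  - left. apply Rinv_0_lt_compat. apply INR_fact_pos.
  - apply pow_le. exact Hy.
Qed.

Lemma kummer (b al w L : R) : 0 < al ->
  (forall y, 0 <= y -> exists l : R, is_series (fun k => Rabs (pr (al - b) al k) * (y ^ k / INR (fact k))) l) ->
  is_series (fun k => pr (al - b) al k * (w ^ k / INR (fact k))) L ->
  is_series (fun k => poch b k / poch al k * ((- w) ^ k / INR (fact k))) (exp (- w) * L).
Proof.
  intros Hal Hconv HL.
  set (a := al - b).
  assert (HB : is_pseries (qq a al) (- w) L).
  { unfold is_pseries. eapply is_series_ext; [|exact HL].
    intro n. toR. rewrite pow_n_pow. change (scal ((- w) ^ n) (qq a al n)) with ((- w) ^ n * qq a al n).
    unfold qq. replace ((- w) ^ n) with ((-1) ^ n * w ^ n).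
    2:{ rewrite <- Rpow_mult_distr. f_equal. ring. }
    replace ((-1) ^ n * w ^ n * ((-1) ^ n * pr a al n / INR (fact n)))
      with (((-1) ^ n * (-1) ^ n) * (pr a al n * (w ^ n / INR (fact n)))).
    2:{ field. apply not_0_INR. apply fact_neq_0. }
    rewrite <- Rpow_mult_distr. replace (-1 * -1) with 1 by ring. rewrite pow1. unfold a. ring. }
  assert (HE : is_pseries (fun n => / INR (fact n)) (- w) (exp (- w))) by apply is_exp_Reals.
  assert (RB : Rbar_lt (Rabs (- w)) (CV_radius (qq a al))).
  { destruct (Hconv (Rabs (- w) + 1)) as [l Hl].
    { pose proof (Rabs_pos (- w)). lra. }
    apply (radius_gt _ _ l). eapply is_series_ext; [|exact Hl].
    intro n. toR. unfold qq. rewrite Rabs_mult.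
    unfold Rdiv. rewrite !Rabs_mult. rewrite Rabs_inv. rewrite pow_1_abs.
    rewrite (Rabs_right (INR (fact n))) by (left; apply INR_fact_pos).
    rewrite (Rabs_right ((Rabs (- w) + 1) ^ n)).
    2:{ apply Rle_ge, pow_le. pose proof (Rabs_pos (- w)). lra. }
    fold a. ring. }
  assert (RE : Rbar_lt (Rabs (- w)) (CV_radius (fun n => / INR (fact n)))).
  { apply (radius_gt _ _ (exp (Rabs (- w) + 1))). apply exp_series_abs.
    pose proof (Rabs_pos (- w)). lra. }
  pose proof (is_pseries_mult _ _ _ _ _ HB HE RB RE) as HM.
  unfold is_pseries in HM.
  replace (exp (- w) * L) with (L * exp (- w)) by ring.
  eapply is_series_ext; [|exact HM].
  intro m. toR. rewrite pow_n_pow. change (scal ((- w) ^ m) (PS_mult (qq a al) (fun n => / INR (fact n)) m))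
    with ((- w) ^ m * PS_mult (qq a al) (fun n => / INR (fact n)) m).
  assert (HC : PS_mult (qq a al) (fun n => / INR (fact n)) m = cc m a al).
  { unfold PS_mult, cc. apply PartSum.sum_eq. intros i Hi. unfold Rdiv. reflexivity. }
  rewrite HC, chu by exact Hal.
  replace (al - a) with b by (unfold a; ring).
  pose proof (poch_pos al m Hal). pose proof (INR_fact_pos m).
  rewrite pow_n_pow. unfold scal; simpl. unfold mult; simpl. field. lra.
Qed.

Lemma exp_mono x y : x <= y -> exp x <= exp y.
Proof. intro H. destruct H as [H|H]. left; apply exp_increasing; exact H. subst; lra. Qed.

Lemma ln_le_sub1 y : 0 < y -> ln y <= y - 1.
Proof. intro Hy. pose proof (exp_ineq1_le (ln y)). rewrite exp_ln in H by exact Hy. lra. Qed.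

Lemma Rdiv_le_of_le_mul a b c : 0 < b -> a <= c * b -> a / b <= c.
Proof.
  intros Hb H. apply (Rmult_le_reg_r b); [exact Hb|].
  unfold Rdiv. rewrite Rmult_assoc, Rinv_l by lra. lra.
Qed.

Lemma Rpower_1_base s : Rpower 1 s = 1.
Proof. unfold Rpower. rewrite ln_1, Rmult_0_r. apply exp_0. Qed.

Lemma Rpower_pos x s : 0 < Rpower x s.
Proof. unfold Rpower. apply exp_pos. Qed.

Lemma L1 x s : 1 < x -> 0 <= s -> 1 + s / x <= Rpower (x / (x - 1)) s.
Proof.
  intros Hx Hs. unfold Rpower.
  eapply Rle_trans; [apply exp_ineq1_le|]. apply exp_mono.
  assert (H : 1 / x <= ln (x / (x - 1))).
  { rewrite ln_div by lra.
    pose proof (ln_le_sub1 ((x - 1) / x) ltac:(apply Rdiv_lt_0_compat; lra)).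
    rewrite ln_div in H by lra.
    assert ((x - 1) / x - 1 = - (1 / x)) by (field; lra). lra. }
  replace (s / x) with (s * (1 / x)) by (field; lra).
  apply Rmult_le_compat_l; lra.
Qed.

Lemma L2 x s : 0 < x -> 0 <= s -> Rpower ((x + s + 1) / (x + s)) s <= 1 + s / x.
Proof.
  intros Hx Hs. unfold Rpower.
  assert (Hy : 0 < x + s) by lra.
  assert (H1 : ln ((x + s + 1) / (x + s)) <= 1 / (x + s)).
  { pose proof (ln_le_sub1 ((x + s + 1) / (x + s)) ltac:(apply Rdiv_lt_0_compat; lra)).
    assert ((x + s + 1) / (x + s) - 1 = 1 / (x + s)) by (field; lra). lra. }
  assert (H2 : s / (x + s) <= ln (1 + s / x)).
  { replace (1 + s / x) with (/ (x / (x + s))) by (field; lra).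
    rewrite ln_Rinv by (apply Rdiv_lt_0_compat; lra).
    pose proof (ln_le_sub1 (x / (x + s)) ltac:(apply Rdiv_lt_0_compat; lra)).
    assert (x / (x + s) - 1 = - (s / (x + s))) by (field; lra). lra. }
  rewrite <- (exp_ln (1 + s / x)).
  2:{ assert (0 <= s / x) by (apply Rdiv_le_0_compat; lra). lra. }
  apply exp_mono.
  eapply Rle_trans; [|exact H2].
  replace (s / (x + s)) with (s * (1 / (x + s))) by (field; lra).
  apply Rmult_le_compat_l; lra.
Qed.

Lemma pr_S a al k : 0 < al -> pr a al (S k) = pr a al k * (1 + (a - al) / (al + INR k)).
Proof.
  intro Hal. unfold pr. simpl.
  pose proof (poch_pos al k Hal). pose proof (pos_INR k).
  field. lra.
Qed.

Lemma pr_upper_aux al s k : 0 < al -> 0 <= s ->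
  pr (al + s) al (S k) <= (1 + s / al) * Rpower ((al + INR k) / al) s.
Proof.
  intros Hal Hs. induction k as [|k IH].
  - rewrite pr_S by exact Hal. unfold pr. simpl.
    replace ((al + 0) / al) with 1 by (field; lra). rewrite Rpower_1_base.
    replace (al + s - al) with s by ring. rewrite Rplus_0_r. lra.
  - rewrite pr_S by exact Hal.
    replace (al + s - al) with s by ring.
    pose proof (pos_INR k).
    pose proof (L1 (al + INR (S k)) s ltac:(rewrite S_INR; lra) Hs) as HL.
    replace ((al + INR (S k)) / (al + INR (S k) - 1)) with ((al + INR (S k)) / (al + INR k)) in HL
      by (rewrite S_INR; field; lra).
    assert (E : Rpower ((al + INR (S k)) / al) s
              = Rpower ((al + INR k) / al) s * Rpower ((al + INR (S k)) / (al + INR k)) s).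
    { rewrite Rpower_mult_distr.
      - f_equal. field. lra.
      - apply Rdiv_lt_0_compat; lra.
      - rewrite S_INR. apply Rdiv_lt_0_compat; lra. }
    rewrite E.
    assert (0 <= 1 + s / (al + INR (S k))).
    { rewrite S_INR. assert (0 <= s / (al + (INR k + 1))) by (apply Rdiv_le_0_compat; lra). lra. }
    assert (0 <= pr (al + s) al (S k)).
    { unfold pr. left. apply Rdiv_lt_0_compat; apply poch_pos; lra. }
    replace ((1 + s / al) * (Rpower ((al + INR k) / al) s * Rpower ((al + INR (S k)) / (al + INR k)) s))
      with ((1 + s / al) * Rpower ((al + INR k) / al) s * Rpower ((al + INR (S k)) / (al + INR k)) s) by ring.
    apply Rmult_le_compat; auto.
Qed.

Lemma Rpower2_le4 s : 0 <= s <= 2 -> Rpower 2 s <= 4.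
Proof.
  intro Hs. replace 4 with (Rpower 2 (INR 2)).
  - apply Rle_Rpower; [lra|]. simpl. lra.
  - rewrite Rpower_pow by lra. simpl. ring.
Qed.

Lemma Rpower4_le16 s : 0 <= s <= 2 -> Rpower 4 s <= 16.
Proof.
  intro Hs. replace 16 with (Rpower 4 (INR 2)).
  - apply Rle_Rpower; [lra|]. simpl. lra.
  - rewrite Rpower_pow by lra. simpl. ring.
Qed.

Lemma pr_upper al s k : / 2 <= al -> 0 <= s <= 3 / 2 ->
  pr (al + s) al k <= 16 * Rpower (INR k + 1) s.
Proof.
  intros Hal Hs.
  destruct k as [|k].
  - unfold pr. simpl. replace (0 + 1) with 1 by ring. rewrite Rpower_1_base. lra.
  - pose proof (pr_upper_aux al s k ltac:(lra) ltac:(lra)) as H.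
    eapply Rle_trans; [exact H|].
    pose proof (pos_INR k).
    assert (H1 : 1 + s / al <= 4).
    { assert (s / al <= 3). { apply Rdiv_le_of_le_mul; [lra|]. nra. } lra. }
    assert (H2 : Rpower ((al + INR k) / al) s <= Rpower 2 s * Rpower (INR (S k) + 1) s).
    { rewrite Rpower_mult_distr by (rewrite ?S_INR; lra).
      apply Rle_Rpower_l; [lra|]. split.
      - apply Rdiv_lt_0_compat; lra.
      - rewrite S_INR. apply Rdiv_le_of_le_mul; [lra|]. nra. }
    pose proof (Rpower2_le4 s ltac:(lra)).
    pose proof (Rpower_pos ((al + INR k) / al) s).
    pose proof (Rpower_pos (INR (S k) + 1) s).
    assert (0 <= 1 + s / al) by (assert (0 <= s / al) by (apply Rdiv_le_0_compat; lra); lra).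
    apply Rle_trans with (4 * (Rpower 2 s * Rpower (INR (S k) + 1) s)).
    + apply Rmult_le_compat; lra.
    + nra.
Qed.

Lemma pr_lower_aux al s k : 0 < al -> 0 <= s ->
  Rpower ((al + s + INR k) / (al + s)) s <= pr (al + s) al k.
Proof.
  intros Hal Hs. induction k as [|k IH].
  - unfold pr. simpl. replace ((al + s + 0) / (al + s)) with 1 by (field; lra).
    rewrite Rpower_1_base. lra.
  - rewrite pr_S by exact Hal.
    replace (al + s - al) with s by ring.
    pose proof (pos_INR k).
    pose proof (L2 (al + INR k) s ltac:(lra) Hs) as HL.
    assert (E : Rpower ((al + s + INR (S k)) / (al + s)) s
              = Rpower ((al + s + INR k) / (al + s)) s * Rpower ((al + INR k + s + 1) / (al + INR k + s)) s).
    { rewrite Rpower_mult_distr.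
      - f_equal. rewrite S_INR. field. lra.
      - apply Rdiv_lt_0_compat; lra.
      - apply Rdiv_lt_0_compat; lra. }
    rewrite E.
    apply Rmult_le_compat; auto; left; apply Rpower_pos.
Qed.

Lemma pr_lower al s k : 0 < al -> 0 <= s -> al + s <= 2 ->
  Rpower (INR k + 1) s / 4 <= pr (al + s) al k.
Proof.
  intros Hal Hs Ha.
  eapply Rle_trans; [|apply pr_lower_aux; lra].
  pose proof (pos_INR k).
  assert (H1 : Rpower (INR k + 1) s = Rpower 2 s * Rpower ((INR k + 1) / 2) s).
  { rewrite Rpower_mult_distr by (try apply Rdiv_lt_0_compat; lra). f_equal. field. }
  assert (H2 : Rpower ((INR k + 1) / 2) s <= Rpower ((al + s + INR k) / (al + s)) s).
  { apply Rle_Rpower_l; [lra|]. split.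
    - apply Rdiv_lt_0_compat; lra.
    - apply Rdiv_le_of_le_mul; [lra|].
      replace ((al + s + INR k) / (al + s) * 2) with ((2 * al + 2 * s + 2 * INR k) / (al + s)) by (field; lra).
      apply Rmult_le_reg_r with (al + s); [lra|].
      unfold Rdiv. rewrite Rmult_assoc, Rinv_l by lra. nra. }
  pose proof (Rpower2_le4 s ltac:(lra)).
  pose proof (Rpower_pos ((INR k + 1) / 2) s).
  rewrite H1. nra.
Qed.

Lemma isR_ext (a b : nat -> R) (l l' : R) :
  (forall n, a n = b n) -> l = l' -> is_series a l -> is_series b l'.
Proof. intros H E Hs. subst. eapply is_series_ext; [|exact Hs]. exact H. Qed.

Lemma isR_plus (a b : nat -> R) (la lb : R) :
  is_series a la -> is_series b lb -> is_series (fun n => a n + b n) (la + lb).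
Proof. intros Ha Hb. exact (is_series_plus _ _ _ _ Ha Hb). Qed.

Lemma isR_scal (c : R) (a : nat -> R) (l : R) :
  is_series a l -> is_series (fun n => c * a n) (c * l).
Proof. intro H. exact (is_series_scal c _ _ H). Qed.

Lemma isR_decr1 (a : nat -> R) (l : R) :
  is_series (fun k => a (S k)) (l - a O) -> is_series a l.
Proof. intro H. apply is_series_decr_1. exact H. Qed.

Definition ee (w : R) (k : nat) : R := w ^ k / INR (fact k).

Lemma ee_S w k : ee w (S k) * INR (S k) = w * ee w k.
Proof.
  unfold ee. rewrite fact_simpl, mult_INR. simpl pow.
  pose proof (INR_fact_pos k). field. split; [lra|]. apply not_0_INR; lia.
Qed.

Lemma ee_pos w k : 0 <= w -> 0 <= ee w k.
Proof.
  intro Hw. unfold ee. apply Rdiv_le_0_compat; [apply pow_le; exact Hw| apply INR_fact_pos].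
Qed.

Lemma ser0 w : is_series (ee w) (exp w).
Proof.
  pose proof (is_exp_Reals w) as H. unfold is_pseries in H.
  eapply isR_ext; [|reflexivity|exact H].
  intro n. cbv beta. rewrite pow_n_pow. unfold ee. unfold scal; simpl; unfold mult; simpl. unfold Rdiv. ring.
Qed.

Lemma serk w : is_series (fun k => INR k * ee w k) (w * exp w).
Proof.
  apply isR_decr1. change (INR 0) with 0. rewrite Rmult_0_l, Rminus_0_r.
  eapply isR_ext; [|reflexivity|exact (isR_scal w _ _ (ser0 w))].
  intro n. rewrite Rmult_comm, ee_S. ring.
Qed.

Lemma serkk w : is_series (fun k => INR k * (INR k - 1) * ee w k) (w * (w * exp w)).
Proof.
  apply isR_decr1. change (INR 0) with 0. rewrite Rmult_0_l, Rmult_0_l, Rminus_0_r.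
  eapply isR_ext; [|reflexivity|exact (isR_scal w _ _ (serk w))].
  intro n. cbv beta. rewrite S_INR. replace (INR n + 1 - 1) with (INR n) by ring.
  rewrite <- S_INR. 
  replace (INR (S n) * INR n * ee w (S n)) with (INR n * (ee w (S n) * INR (S n))) by ring.
  rewrite ee_S. ring.
Qed.

Lemma ser1 w : is_series (fun k => (INR k + 1) * ee w k) ((w + 1) * exp w).
Proof.
  eapply isR_ext; [| |exact (isR_plus _ _ _ _ (serk w) (ser0 w))].
  - intro n. simpl. ring.
  - ring.
Qed.

Lemma ser2 w : is_series (fun k => (INR k + 1) ^ 2 * ee w k) ((w ^ 2 + 3 * w + 1) * exp w).
Proof.
  pose proof (isR_plus _ _ _ _ (serkk w) (isR_plus _ _ _ _ (isR_scal 3 _ _ (serk w)) (ser0 w))) as H.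
  eapply isR_ext; [| |exact H].
  - intro n. simpl. ring.
  - ring.
Qed.

Lemma sum_n_le_R (a b : nat -> R) n : (forall k, a k <= b k) -> sum_n a n <= sum_n b n.
Proof.
  intro H. induction n as [|n IH].
  - rewrite !sum_O. apply H.
  - rewrite !sum_Sn. change (sum_n a n + a (S n) <= sum_n b n + b (S n)).
    pose proof (H (S n)). lra.
Qed.

Lemma series_le (a b : nat -> R) la lb : (forall n, a n <= b n) ->
  is_series a la -> is_series b lb -> la <= lb.
Proof.
  intros H Ha Hb.
  assert (R : Rbar_le la lb).
  { apply (is_lim_seq_le (sum_n a) (sum_n b)).
    - intro n. apply sum_n_le_R. exact H.
    - exact Ha.
    - exact Hb. }
  exact R.
Qed.

Lemma xs_upper x s : 0 < x -> 0 <= s <= 2 -> Rpower x s <= 1 + x ^ 2.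
Proof.
  intros Hx Hs. destruct (Rle_lt_dec x 1) as [H|H].
  - assert (Rpower x s <= Rpower 1 s) by (apply Rle_Rpower_l; lra).
    rewrite Rpower_1_base in H0. pose proof (pow2_ge_0 x). lra.
  - assert (Rpower x s <= Rpower x (INR 2)) by (apply Rle_Rpower; [lra|simpl; lra]).
    rewrite Rpower_pow in H0 by lra. lra.
Qed.

Lemma xs_lower x s : 0 < x -> 0 <= s <= 2 -> (1 - 16 / 9 * (x - 1) ^ 2) / 16 <= Rpower x s.
Proof.
  intros Hx Hs. pose proof (Rpower_pos x s) as Hp.
  destruct (Rle_lt_dec (/ 4) x) as [H|H].
  - assert (H1 : Rpower 1 s <= Rpower (4 * x) s) by (apply Rle_Rpower_l; lra).
    rewrite Rpower_1_base, <- Rpower_mult_distr in H1 by lra.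
    pose proof (Rpower4_le16 s Hs). pose proof (Rpower_pos 4 s).
    assert (1 <= 16 * Rpower x s) by nra.
    pose proof (pow2_ge_0 (x - 1)). lra.
  - assert (16 / 9 * (x - 1) ^ 2 > 1) by nra. lra.
Qed.

Lemma pr_nonneg a al k : 0 < a -> 0 < al -> 0 <= pr a al k.
Proof. intros. unfold pr. left. apply Rdiv_lt_0_compat; apply poch_pos; auto. Qed.

Lemma pr_ex al s y : / 2 <= al -> 0 <= s <= 3 / 2 -> 0 <= y ->
  exists l : R, is_series (fun k => Rabs (pr (al + s) al k) * (y ^ k / INR (fact k))) l.
Proof.
  intros Hal Hs Hy.
  assert (Hex : @ex_series R_AbsRing R_CompleteNormedModule (fun k => Rabs (pr (al + s) al k) * (y ^ k / INR (fact k)))).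
  { apply (@ex_series_le R_AbsRing R_CompleteNormedModule _ (fun k => 16 * ((INR k + 1) ^ 2 * ee y k))).
    - intro n. change (norm ?z) with (Rabs z).
      rewrite Rabs_pos_eq.
      2:{ apply Rmult_le_pos; [apply Rabs_pos|apply ee_pos; exact Hy]. }
      rewrite Rabs_pos_eq by (apply pr_nonneg; lra).
      fold (ee y n).
      pose proof (pr_upper al s n ltac:(lra) Hs).
      pose proof (pos_INR n).
      assert (Rpower (INR n + 1) s <= (INR n + 1) ^ 2).
      { rewrite <- Rpower_pow by lra. apply Rle_Rpower; [lra|simpl; lra]. }
      pose proof (ee_pos y n Hy). pose proof (pr_nonneg (al + s) al n ltac:(lra) ltac:(lra)).
      nra.
    - exists (16 * ((y ^ 2 + 3 * y + 1) * exp y)). apply isR_scal. apply ser2. }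
  destruct Hex as [l Hl]. exists l. exact Hl.
Qed.

Lemma M_bounds al s w : / 2 <= al -> 0 <= s <= 3 / 2 -> al + s <= 2 -> 1 <= w ->
  exists L : R, is_series (fun k => pr (al + s) al k * (w ^ k / INR (fact k))) L /\
    / 120 * Rpower w s * exp w <= L <= 192 * Rpower w s * exp w.
Proof.
  intros Hal Hs Ha Hw.
  destruct (pr_ex al s w Hal Hs ltac:(lra)) as [L HL].
  exists L.
  assert (HL' : is_series (fun k => pr (al + s) al k * ee w k) L).
  { eapply isR_ext; [|reflexivity|exact HL]. intro n. cbv beta.
    rewrite Rabs_pos_eq by (apply pr_nonneg; lra). reflexivity. }
  split.
  { eapply isR_ext; [|reflexivity|exact HL']. intro n. reflexivity. }
  set (P := Rpower (w + 1) s).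
  assert (HP : 0 < P) by apply Rpower_pos.
  assert (Hsplit : forall k, Rpower (INR k + 1) s = P * Rpower ((INR k + 1) / (w + 1)) s).
  { intro k. pose proof (pos_INR k). unfold P.
    rewrite Rpower_mult_distr by (try apply Rdiv_lt_0_compat; lra). f_equal. field. lra. }
  assert (HPw : Rpower w s <= P <= 4 * Rpower w s).
  { split.
    - apply Rle_Rpower_l; lra.
    - unfold P. pose proof (Rpower2_le4 s ltac:(lra)). pose proof (Rpower_pos w s).
      apply Rle_trans with (Rpower (2 * w) s).
      + apply Rle_Rpower_l; lra.
      + rewrite <- Rpower_mult_distr by lra. nra. }
  assert (Hw1 : 0 < w + 1) by lra.
  assert (Hexp : 0 < exp w) by apply exp_pos.
  split.
  -
    set (g := fun k => / 4 * P * (/ 16 * (ee w k - 16 / 9 * ((INR k + 1) ^ 2 * ee w k / (w + 1) ^ 2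
                         - 2 * ((INR k + 1) * ee w k) / (w + 1) + ee w k)))).
    assert (Hg : is_series g (/ 4 * P * (/ 16 * (exp w - 16 / 9 * ((w ^ 2 + 3 * w + 1) * exp w / (w + 1) ^ 2
                         - 2 * ((w + 1) * exp w) / (w + 1) + exp w))))).
    { unfold g. apply isR_scal. apply isR_scal.
      eapply isR_ext; [| |exact (isR_plus _ _ _ _ (ser0 w) (isR_scal (- (16/9)) _ _
          (isR_plus _ _ _ _ (isR_plus _ _ _ _ (isR_scal (/ (w+1)^2) _ _ (ser2 w))
                 (isR_scal (- 2 / (w + 1)) _ _ (ser1 w))) (ser0 w))))].
      - intro n. cbv beta. field. lra.
      - field. lra. }
    assert (Hle : forall k, g k <= pr (al + s) al k * ee w k).
    { intro k. unfold g. pose proof (pos_INR k).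
      pose proof (pr_lower al s k ltac:(lra) ltac:(lra) Ha) as H1.
      rewrite Hsplit in H1.
      pose proof (xs_lower ((INR k + 1) / (w + 1)) s ltac:(apply Rdiv_lt_0_compat; lra) ltac:(lra)) as H2.
      pose proof (ee_pos w k ltac:(lra)) as H3.
      assert (E : / 16 * (ee w k - 16 / 9 * ((INR k + 1) ^ 2 * ee w k / (w + 1) ^ 2 -
                 2 * ((INR k + 1) * ee w k) / (w + 1) + ee w k))
              = (1 - 16 / 9 * ((INR k + 1) / (w + 1) - 1) ^ 2) / 16 * ee w k) by (field; lra).
      rewrite E.
      apply Rle_trans with (/ 4 * P * Rpower ((INR k + 1) / (w + 1)) s * ee w k).
      - set (B := (1 - 16 / 9 * ((INR k + 1) / (w + 1) - 1) ^ 2) / 16) in *.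
        set (Rr := Rpower ((INR k + 1) / (w + 1)) s) in *.
        replace (/ 4 * P * (B * ee w k)) with ((/ 4 * P * ee w k) * B) by ring.
        replace (/ 4 * P * Rr * ee w k) with ((/ 4 * P * ee w k) * Rr) by ring.
        apply Rmult_le_compat_l; [|exact H2].
        apply Rmult_le_pos; [lra|exact H3].
      - apply Rmult_le_compat_r; [exact H3|].
        replace (/ 4 * P * Rpower ((INR k + 1) / (w + 1)) s) with (P * Rpower ((INR k + 1) / (w + 1)) s / 4) by field.
        exact H1. }
    pose proof (series_le _ _ _ _ Hle Hg HL') as H.
    assert (Hq : w / (w + 1) ^ 2 <= / 4).
    { apply Rdiv_le_of_le_mul; [nra|]. nra. }
    assert (E2 : exp w - 16 / 9 * ((w ^ 2 + 3 * w + 1) * exp w / (w + 1) ^ 2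
                         - 2 * ((w + 1) * exp w) / (w + 1) + exp w)
                 = exp w * (1 - 16 / 9 * (w / (w + 1) ^ 2))) by (field; lra).
    rewrite E2 in H.
    assert (exp w * (5 / 9) <= exp w * (1 - 16 / 9 * (w / (w + 1) ^ 2))) by nra.
    pose proof (Rpower_pos w s). nra.
  -
    set (g := fun k => 16 * P * (ee w k + (INR k + 1) ^ 2 * ee w k / (w + 1) ^ 2)).
    assert (Hg : is_series g (16 * P * (exp w + (w ^ 2 + 3 * w + 1) * exp w / (w + 1) ^ 2))).
    { unfold g. apply isR_scal.
      eapply isR_ext; [| |exact (isR_plus _ _ _ _ (ser0 w) (isR_scal (/ (w+1)^2) _ _ (ser2 w)))].
      - intro n. cbv beta. field. lra.
      - field. lra. }
    assert (Hle : forall k, pr (al + s) al k * ee w k <= g k).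
    { intro k. unfold g. pose proof (pos_INR k).
      pose proof (pr_upper al s k ltac:(lra) Hs) as H1.
      rewrite Hsplit in H1.
      pose proof (xs_upper ((INR k + 1) / (w + 1)) s ltac:(apply Rdiv_lt_0_compat; lra) ltac:(lra)) as H2.
      pose proof (ee_pos w k ltac:(lra)) as H3.
      assert (E : ee w k + (INR k + 1) ^ 2 * ee w k / (w + 1) ^ 2
                 = (1 + ((INR k + 1) / (w + 1)) ^ 2) * ee w k) by (field; lra).
      rewrite E.
      apply Rle_trans with (16 * P * Rpower ((INR k + 1) / (w + 1)) s * ee w k).
      - apply Rmult_le_compat_r; lra.
      - rewrite !Rmult_assoc. apply Rmult_le_compat_l; [lra|].
        apply Rmult_le_compat_l; [lra|]. apply Rmult_le_compat_r; lra. }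
    pose proof (series_le _ _ _ _ Hle HL' Hg) as H.
    assert (Hq : (w ^ 2 + 3 * w + 1) / (w + 1) ^ 2 <= 2).
    { apply Rdiv_le_of_le_mul; [nra|]. nra. }
    assert (E2 : exp w + (w ^ 2 + 3 * w + 1) * exp w / (w + 1) ^ 2
                 = exp w * (1 + (w ^ 2 + 3 * w + 1) / (w + 1) ^ 2)) by (field; lra).
    rewrite E2 in H.
    assert (exp w * (1 + (w ^ 2 + 3 * w + 1) / (w + 1) ^ 2) <= 3 * exp w) by nra.
    pose proof (Rpower_pos w s). nra.
Qed.

Ltac toR2 := match goal with |- ?x = ?y => change (@eq R x y) end.

Lemma rew1 (x y : R) : x = x + y - y. Proof. ring. Qed.
Lemma rew2 (x y : R) : y = x + y - x. Proof. ring. Qed.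

Lemma tri (a b l : R) : Rabs (a - b) <= Rabs (a - l) + Rabs (b - l).
Proof. replace (a - b) with ((a - l) + - (b - l)) by ring. eapply Rle_trans; [apply Rabs_triang|]. rewrite Rabs_Ropp. lra. Qed.

Lemma RInt_abs_le (f g : R -> R) x y :
  ex_RInt f x y -> ex_RInt g x y ->
  (forall t, Rmin x y <= t <= Rmax x y -> Rabs (f t) <= g t) ->
  Rabs (RInt f x y) <= Rabs (RInt g x y).
Proof.
  intros Hf Hg H.
  assert (K : forall x y, x <= y -> ex_RInt f x y -> ex_RInt g x y ->
     (forall t, x <= t <= y -> Rabs (f t) <= g t) -> Rabs (RInt f x y) <= Rabs (RInt g x y)).
  { clear. intros x y Hxy Hf Hg H.
    assert (H1 : RInt f x y <= RInt g x y).
    { apply RInt_le; auto. intros t Ht. pose proof (H t ltac:(lra)). pose proof (Rle_abs (f t)). lra. }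
    assert (H2 : RInt (fun t => - g t) x y <= RInt f x y).
    { apply RInt_le; auto.
      - apply (@ex_RInt_opp R_CompleteNormedModule). exact Hg.
      - intros t Ht. pose proof (H t ltac:(lra)) as T1. pose proof (Rabs_pos (f t)) as T2.
        pose proof (Rle_abs (- f t)) as T3. rewrite Rabs_Ropp in T3. lra. }
    assert (E : RInt (fun t => - g t) x y = - RInt g x y).
    { exact (@RInt_opp R_CompleteNormedModule g x y Hg). }
    rewrite E in H2.
    apply Rabs_le. split.
    - pose proof (Rle_abs (RInt g x y)) as T. lra.
    - pose proof (Rle_abs (RInt g x y)). lra. }
  destruct (Rle_dec x y) as [Hxy|Hxy].
  - apply K; auto. intros t Ht. apply H. rewrite Rmin_left, Rmax_right by lra. exact Ht.
  - assert (Ef : RInt f x y = - RInt f y x).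
    { rewrite <- (@opp_RInt_swap R_CompleteNormedModule f y x) by (apply ex_RInt_swap; exact Hf).
      reflexivity. }
    assert (Eg : RInt g x y = - RInt g y x).
    { rewrite <- (@opp_RInt_swap R_CompleteNormedModule g y x) by (apply ex_RInt_swap; exact Hg).
      reflexivity. }
    rewrite Ef, Eg, !Rabs_Ropp.
    apply K; try (apply ex_RInt_swap; assumption); [lra|].
    intros t Ht. apply H. rewrite Rmin_right, Rmax_left by lra. exact Ht.
Qed.

Lemma RInt_Chasles_R (f : R -> R) a b c :
  ex_RInt f a b -> ex_RInt f b c -> RInt f a b + RInt f b c = RInt f a c.
Proof. intros H1 H2. exact (@RInt_Chasles R_CompleteNormedModule f a b c H1 H2). Qed.

Lemma cmp_ex (Fa Fb : (R -> Prop) -> Prop) (FFa : ProperFilter Fa) (FFb : ProperFilter Fb)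
  (D : R -> Prop) (f g : R -> R) (lg : R) :
  Fa D -> Fb D ->
  (forall x y, D x -> D y -> forall t, Rmin x y <= t <= Rmax x y -> D t) ->
  (forall x y, D x -> D y -> ex_RInt f x y) ->
  (forall x y, D x -> D y -> ex_RInt g x y) ->
  (forall t, D t -> Rabs (f t) <= g t) ->
  is_RInt_gen g Fa Fb lg ->
  ex_RInt_gen f Fa Fb.
Proof.
  intros HDa HDb Hconv Hf Hg Hfg HI.
  assert (Hlim : exists l : R, filterlim (fun ab : R * R => RInt f (fst ab) (snd ab))
                        (filter_prod Fa Fb) (locally l)).
  { apply (filterlim_locally_cauchy (U := R_CompleteSpace)).
    intro eps.
    assert (Heps4 : 0 < eps / 4) by (destruct eps; simpl; lra).
    pose proof (proj1 (filterlimi_locally _ lg) HI (mkposreal _ Heps4)) as H1.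
    assert (H2 : filter_prod Fa Fb (fun ab : R * R => D (fst ab) /\ D (snd ab))).
    { apply (Filter_prod _ _ _ D D); auto. }
    destruct (filter_and _ _ H1 H2) as [Q R0 HQ HR HP].
    exists (fun ab : R * R => Q (fst ab) /\ R0 (snd ab)). split.
    { apply (Filter_prod _ _ _ Q R0); auto. }
    intros [u1 v1] [u2 v2] [Hu1 Hv1] [Hu2 Hv2]. simpl in *.
    assert (Near : forall x y, Q x -> R0 y -> D x /\ D y /\ Rabs (RInt g x y - lg) < eps / 4).
    { intros x y Hx Hy. destruct (HP x y Hx Hy) as [[z [Hz Hb]] [Dx Dy]]. simpl in *.
      split; [exact Dx|]. split; [exact Dy|].
      rewrite (is_RInt_unique g x y z Hz).
      change (ball lg (eps / 4) z) with (Rabs (z - lg) < eps / 4) in Hb. exact Hb. }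
    destruct (Near u1 v1 Hu1 Hv1) as [Du1 [Dv1 N11]].
    destruct (Near u2 v2 Hu2 Hv2) as [Du2 [Dv2 N22]].
    destruct (Near u2 v1 Hu2 Hv1) as [_ [_ N21]].
    destruct (Near u1 v2 Hu1 Hv2) as [_ [_ N12]].
    change (Rabs (RInt f u2 v2 - RInt f u1 v1) < eps).
    assert (C1 : RInt f u2 v2 = RInt f u2 u1 + RInt f u1 v1 + RInt f v1 v2).
    { rewrite RInt_Chasles_R by auto. rewrite RInt_Chasles_R; auto. }
    assert (C2 : RInt g u2 u1 = RInt g u2 v1 - RInt g u1 v1).
    { rewrite <- (RInt_Chasles_R g u2 u1 v1) by auto. apply rew1. }
    assert (C3 : RInt g v1 v2 = RInt g u1 v2 - RInt g u1 v1).
    { rewrite <- (RInt_Chasles_R g u1 v1 v2) by auto. apply rew2. }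
    assert (B1 : Rabs (RInt f u2 u1) <= Rabs (RInt g u2 u1)).
    { apply RInt_abs_le; auto. intros t Ht. apply Hfg. exact (Hconv u2 u1 Du2 Du1 t Ht). }
    assert (B2 : Rabs (RInt f v1 v2) <= Rabs (RInt g v1 v2)).
    { apply RInt_abs_le; auto. intros t Ht. apply Hfg. exact (Hconv v1 v2 Dv1 Dv2 t Ht). }
    rewrite C1. replace (RInt f u2 u1 + RInt f u1 v1 + RInt f v1 v2 - RInt f u1 v1)
      with (RInt f u2 u1 + RInt f v1 v2) by ring.
    eapply Rle_lt_trans; [apply Rabs_triang|].
    rewrite C2 in B1. rewrite C3 in B2.
    pose proof (tri (RInt g u2 v1) (RInt g u1 v1) lg).
    pose proof (tri (RInt g u1 v2) (RInt g u1 v1) lg).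
    destruct eps as [e He]; simpl in *. lra. }
  destruct Hlim as [l Hl]. exists l.
  unfold is_RInt_gen.
  apply (filterlimi_lim_ext_loc (fun ab : R * R => RInt f (fst ab) (snd ab))).
  - apply (Filter_prod _ _ _ D D); auto.
    intros x y Dx Dy. simpl. apply (@RInt_correct R_CompleteNormedModule). auto.
  - exact Hl.
Qed.

Lemma locally_pos x : 0 < x -> locally x (fun y => 0 < y).
Proof.
  intro Hx. exists (mkposreal x Hx). intros y Hy.
  change (Rabs (y - x) < x) in Hy. apply Rabs_def2 in Hy. lra.
Qed.

Lemma deriv_int (F f : R -> R) (Fa Fb : (R -> Prop) -> Prop) {FFa : Filter Fa} {FFb : Filter Fb} la lb :
  Fa (fun x => 0 < x) -> Fb (fun x => 0 < x) ->
  (forall x, 0 < x -> is_derive F x (f x)) -> (forall x, 0 < x -> continuous f x) ->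
  filterlim F Fa (locally la) -> filterlim F Fb (locally lb) ->
  is_RInt_gen f Fa Fb (lb - la).
Proof.
  intros Ha Hb Hd Hc Hla Hlb.
  apply (is_RInt_gen_ext (Derive F)).
  { apply (Filter_prod _ _ _ _ _ Ha Hb). intros x y Hx Hy t Ht. simpl in Ht.
    apply is_derive_unique. apply Hd.
    assert (0 < Rmin x y) by (apply Rmin_glb_lt; auto). lra. }
  apply is_RInt_gen_Derive.
  - apply (Filter_prod _ _ _ _ _ Ha Hb). intros x y Hx Hy t Ht. simpl in Ht.
    assert (0 < Rmin x y) by (apply Rmin_glb_lt; auto).
    eexists. apply Hd. lra.
  - apply (Filter_prod _ _ _ _ _ Ha Hb). intros x y Hx Hy t Ht. simpl in Ht.
    assert (0 < Rmin x y) by (apply Rmin_glb_lt; auto).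
    apply (continuous_ext_loc _ f).
    + destruct (locally_pos t ltac:(lra)) as [e He].
      exists e. intros z Hz. symmetry. apply is_derive_unique. apply Hd. apply He. exact Hz.
    + apply Hc. lra.
  - exact Hla.
  - exact Hlb.
Qed.

Lemma at_point_lim (F : R -> R) b : filterlim F (at_point b) (locally (F b)).
Proof.
  intros P HP. unfold filtermap, at_point. apply locally_singleton. exact HP.
Qed.

Lemma Rpower_lim0 (K p : R) : 0 < p -> filterlim (fun t => K * Rpower t p) (at_right 0) (locally 0).
Proof.
  intros Hp P [eps HP].
  unfold filtermap.
  set (z := eps / (Rabs K + 1)).
  assert (Hz : 0 < z) by (unfold z; apply Rdiv_lt_0_compat; [destruct eps; simpl; lra| pose proof (Rabs_pos K); lra]).
  exists (mkposreal (Rpower z (/ p)) (ltac:(unfold Rpower; apply exp_pos))).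
  intros y Hy Hy0. apply HP.
  change (Rabs (y - 0) < Rpower z (/ p)) in Hy.
  rewrite Rminus_0_r, Rabs_right in Hy by lra.
  change (Rabs (K * Rpower y p - 0) < eps).
  rewrite Rminus_0_r, Rabs_mult.
  assert (H1 : Rpower y p < z).
  { replace z with (Rpower (Rpower z (/ p)) p).
    - apply Rlt_Rpower_l; lra.
    - rewrite Rpower_mult. replace (/ p * p) with 1 by (field; lra). apply Rpower_1. exact Hz. }
  rewrite (Rabs_right (Rpower y p)) by (left; unfold Rpower; apply exp_pos).
  pose proof (Rabs_pos K).
  assert (Rabs K * Rpower y p <= Rabs K * z) by (apply Rmult_le_compat_l; lra).
  assert (Rabs K * z < eps).
  { unfold z. apply Rlt_le_trans with ((Rabs K + 1) * (eps / (Rabs K + 1))).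
    - apply Rmult_lt_compat_r; [exact Hz| lra].
    - right. field. lra. }
  lra.
Qed.

Lemma exp_lim_inf (K c : R) : 0 < c -> filterlim (fun t => K * exp (- c * t)) (Rbar_locally p_infty) (locally 0).
Proof.
  intro Hc.
  assert (H : is_lim (fun t => K * exp (- c * t)) p_infty (Rbar_mult K 0)).
  { apply is_lim_scal_l.
    apply (is_lim_comp (fun y => exp y) (fun t => - c * t) p_infty 0 m_infty).
    - exact is_lim_exp_m.
    - replace m_infty with (Rbar_mult (- c) p_infty).
      + apply is_lim_scal_l. apply is_lim_id.
      + simpl. destruct (Rle_dec 0 (-c)); [exfalso; lra|]. reflexivity.
    - exists 0. intros x _. discriminate. }
  simpl in H. rewrite Rmult_0_r in H. exact H.
Qed.

Lemma at_right0_pos : at_right 0 (fun x => 0 < x).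
Proof. exists (mkposreal 1 Rlt_0_1). intros y _ Hy. exact Hy. Qed.

Lemma pinf_pos : Rbar_locally p_infty (fun x => 0 < x).
Proof. exists 0. intros x Hx. exact Hx. Qed.

Lemma Rpower_cont q x : 0 < x -> continuous (fun t => Rpower t q) x.
Proof.
  intro Hx. apply (ex_derive_continuous (K := R_AbsRing) (V := R_NormedModule)). exists (q * Rpower x (q - 1)).
  apply is_derive_Reals. apply derivable_pt_lim_power. exact Hx.
Qed.

Lemma G1 (K p b : R) : 0 < p -> 0 < b ->
  is_RInt_gen (fun t => K * Rpower t (p - 1)) (at_right 0) (at_point b) (K / p * Rpower b p).
Proof.
  intros Hp Hb.
  replace (K / p * Rpower b p) with (K / p * Rpower b p - 0) by ring.
  apply (deriv_int (fun t => K / p * Rpower t p) _ (at_right 0) (at_point b)).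
  - exact at_right0_pos.
  - exact Hb.
  - intros x Hx.
    replace (K * Rpower x (p - 1)) with (K / p * (p * Rpower x (p - 1))) by (field; lra).
    apply (is_derive_scal (fun t => Rpower t p)).
    apply is_derive_Reals. apply derivable_pt_lim_power. exact Hx.
  - intros x Hx. apply (continuous_scal_r K (fun t => Rpower t (p - 1))). apply Rpower_cont. exact Hx.
  - apply Rpower_lim0. exact Hp.
  - apply (at_point_lim (fun t => K / p * Rpower t p)).
Qed.

Lemma G2 (K c b : R) : 0 < c -> 0 < b ->
  is_RInt_gen (fun t => K * exp (- c * t)) (at_point b) (Rbar_locally p_infty) (K / c * exp (- c * b)).
Proof.
  intros Hc Hb.
  replace (K / c * exp (- c * b)) with (0 - (- (K / c)) * exp (- c * b)) by ring.
  apply (deriv_int (fun t => - (K / c) * exp (- c * t)) _ (at_point b) (Rbar_locally p_infty)).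
  - exact Hb.
  - exact pinf_pos.
  - intros x Hx. auto_derive; [exact I|]. field. lra.
  - intros x Hx. apply (ex_derive_continuous (K := R_AbsRing) (V := R_NormedModule)). auto_derive. exact I.
  - apply (at_point_lim (fun t => - (K / c) * exp (- c * t))).
  - apply exp_lim_inf. exact Hc.
Qed.

Definition hf (w a c t : R) : R := exp (- w * t) * Rpower t (a - 1) * Rpower (1 + t) c.

Lemma hf_cont w a c x : 0 < x -> continuous (hf w a c) x.
Proof.
  intro Hx. apply (ex_derive_continuous (K := R_AbsRing) (V := R_NormedModule)). unfold hf, Rpower. auto_derive. lra.
Qed.

Lemma hf_nonneg w a c t : 0 <= hf w a c t.
Proof.
  unfold hf. left. apply Rmult_lt_0_compat; [apply Rmult_lt_0_compat|]; try apply exp_pos; apply Rpower_pos.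
Qed.

Lemma exRInt_pos (f : R -> R) x y : (forall t, 0 < t -> continuous f t) -> 0 < x -> 0 < y -> ex_RInt f x y.
Proof.
  intros Hc Hx Hy. apply (@ex_RInt_continuous R_CompleteNormedModule).
  intros z Hz. apply Hc. assert (0 < Rmin x y) by (apply Rmin_glb_lt; auto). lra.
Qed.

Lemma Rpower_le1 x c : 1 <= x -> c <= 0 -> Rpower x c <= 1.
Proof.
  intros Hx Hc. rewrite <- (Rpower_O x) by lra. apply Rle_Rpower; lra.
Qed.

Lemma Rpower_neg_lb x c : 1 <= x <= 2 -> -4 <= c <= 0 -> / 16 <= Rpower x c.
Proof.
  intros Hx Hc.
  replace c with (- (- c)) by ring. rewrite Rpower_Ropp.
  assert (H1 : Rpower x (- c) <= Rpower 2 (- c)) by (apply Rle_Rpower_l; lra).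
  assert (H2 : Rpower 2 (- c) <= 16).
  { replace 16 with (Rpower 2 (INR 4)).
    - apply Rle_Rpower; [lra|]. simpl. lra.
    - rewrite Rpower_pow by lra. simpl. ring. }
  pose proof (Rpower_pos x (- c)).
  apply Rinv_le_contravar; lra.
Qed.

Lemma Rpower_inv_base w a : 0 < w -> Rpower (/ w) a = Rpower w (- a).
Proof. intro Hw. unfold Rpower. rewrite ln_Rinv by exact Hw. f_equal. ring. Qed.

Lemma prod3_le A B C : 0 <= A <= 1 -> 0 <= B -> 0 <= C <= 1 -> A * B * C <= B.
Proof.
  intros HA HB HC. apply Rle_trans with (1 * B * 1); [|lra].
  apply Rmult_le_compat; try lra.
  - apply Rmult_le_pos; lra.
  - apply Rmult_le_compat_r; lra.
Qed.

Lemma piece1 w a c : 1 <= w -> / 2 <= a <= 2 -> -4 <= c <= 0 ->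
  exists I1, is_RInt_gen (hf w a c) (at_right 0) (at_point (/ w)) I1 /\
    / 96 * Rpower w (- a) <= I1 <= 2 * Rpower w (- a).
Proof.
  intros Hw Ha Hc.
  set (b := / w).
  assert (Hb : 0 < b) by (unfold b; apply Rinv_0_lt_compat; lra).
  assert (Hb1 : b <= 1) by (unfold b; rewrite <- Rinv_1; apply Rinv_le_contravar; lra).
  set (D := fun x => 0 < x <= b).
  assert (HD1 : at_right 0 D).
  { exists (mkposreal b Hb). intros y Hy Hy0. change (Rabs (y - 0) < b) in Hy.
    rewrite Rminus_0_r, Rabs_right in Hy by lra. unfold D. lra. }
  assert (HD2 : at_point b D) by (unfold at_point, D; lra).
  assert (Hconv : forall x y, D x -> D y -> forall t, Rmin x y <= t <= Rmax x y -> D t).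
  { unfold D. intros x y Hx Hy t Ht.
    assert (0 < Rmin x y) by (apply Rmin_glb_lt; lra).
    assert (Rmax x y <= b) by (apply Rmax_lub; lra). lra. }
  assert (Hg : is_RInt_gen (fun t => 1 * Rpower t (a - 1)) (at_right 0) (at_point b) (1 / a * Rpower b a))
    by (apply G1; lra).
  assert (Hex : ex_RInt_gen (hf w a c) (at_right 0) (at_point b)).
  { apply (cmp_ex _ _ _ _ D (hf w a c) (fun t => 1 * Rpower t (a - 1)) (1 / a * Rpower b a) HD1 HD2 Hconv).
    - intros x y Hx Hy. apply exRInt_pos; [apply hf_cont| apply Hx| apply Hy].
    - intros x y Hx Hy. apply exRInt_pos; [|apply Hx|apply Hy].
      intros t Ht. apply (continuous_scal_r 1 (fun t => Rpower t (a - 1))). apply Rpower_cont. exact Ht.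
    - intros t Ht. unfold D in Ht. rewrite Rabs_right by (apply Rle_ge, hf_nonneg).
      unfold hf. rewrite Rmult_1_l.
      assert (exp (- w * t) <= 1) by (rewrite <- exp_0; apply exp_mono; nra).
      assert (Rpower (1 + t) c <= 1) by (apply Rpower_le1; lra).
      pose proof (exp_pos (- w * t)). pose proof (Rpower_pos t (a - 1)). pose proof (Rpower_pos (1 + t) c).
      apply prod3_le; lra.
    - exact Hg. }
  destruct Hex as [I1 HI1]. exists I1. split; [exact HI1|].
  assert (Hba : Rpower b a = Rpower w (- a)) by (apply Rpower_inv_base; lra).
  assert (Hfilt1 : filter_prod (at_right 0) (at_point b) (fun ab : R * R => fst ab <= snd ab)).
  { apply (Filter_prod (at_right 0) (at_point b) _ D (fun y => y = b) HD1 (eq_refl b)). intros x y Hx Hy. simpl. unfold D in Hx. lra. }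
  pose proof (Rpower_pos w (- a)) as HW.
  split.
  - set (L := / 48).
    assert (Hl : is_RInt_gen (fun t => L * Rpower t (a - 1)) (at_right 0) (at_point b) (L / a * Rpower b a))
      by (apply G1; lra).
    pose proof (@RInt_gen_norm R_CompleteNormedModule (at_right 0) (at_point b) _ _ (fun t => L * Rpower t (a - 1)) (hf w a c) (L / a * Rpower b a) I1 Hfilt1) as H.
    assert (Hle : filter_prod (at_right 0) (at_point b) (fun ab : R * R =>
        forall x, fst ab <= x <= snd ab -> norm (L * Rpower x (a - 1)) <= hf w a c x)).
    { apply (Filter_prod (at_right 0) (at_point b) _ D (fun y => y = b) HD1 (eq_refl b)). intros x y Hx Hy t Ht. simpl in Ht.
      unfold D in Hx. subst y.
      change (norm (L * Rpower t (a - 1))) with (Rabs (L * Rpower t (a - 1))).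
      pose proof (Rpower_pos t (a - 1)).
      rewrite Rabs_right by (unfold L; apply Rle_ge; apply Rmult_le_pos; lra).
      unfold hf.
      assert (E1 : / 3 <= exp (- w * t)).
      { assert (exp (-1) <= exp (- w * t)) by (apply exp_mono; unfold b in Ht;
          assert (w * t <= w * / w) by (apply Rmult_le_compat_l; lra);
          rewrite Rinv_r in H1 by lra; lra).
        assert (exp (-1) = / exp 1) by (rewrite <- exp_Ropp; f_equal).
        pose proof exp_le_3. pose proof (exp_pos 1).
        assert (/ 3 <= / exp 1) by (apply Rinv_le_contravar; lra). lra. }
      assert (E2 : / 16 <= Rpower (1 + t) c) by (apply Rpower_neg_lb; lra).
      unfold L. pose proof (exp_pos (- w * t)).
      replace (/ 48) with (/ 3 * / 16) by field.
      assert (/3 * /16 <= exp (- w * t) * Rpower (1 + t) c) by nra.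
      nra. }
    specialize (H Hle Hl HI1).
    change (norm (L / a * Rpower b a)) with (Rabs (L / a * Rpower b a)) in H.
    rewrite Rabs_right in H by (unfold L; apply Rle_ge; apply Rmult_le_pos; [apply Rdiv_le_0_compat; lra| left; apply Rpower_pos]).
    rewrite Hba in H.
    assert (/ 96 <= L / a) by (unfold L; apply Rle_trans with (/ 48 / 2); [lra|]; apply Rmult_le_compat_l; [lra|]; apply Rinv_le_contravar; lra).
    nra.
  - pose proof (@RInt_gen_norm R_CompleteNormedModule (at_right 0) (at_point b) _ _ (hf w a c) (fun t => 1 * Rpower t (a - 1)) I1 (1 / a * Rpower b a) Hfilt1) as H.
    assert (Hle : filter_prod (at_right 0) (at_point b) (fun ab : R * R =>
        forall x, fst ab <= x <= snd ab -> norm (hf w a c x) <= 1 * Rpower x (a - 1))).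
    { apply (Filter_prod (at_right 0) (at_point b) _ D (fun y => y = b) HD1 (eq_refl b)). intros x y Hx Hy t Ht. simpl in Ht.
      unfold D in Hx. subst y.
      change (norm (hf w a c t)) with (Rabs (hf w a c t)).
      rewrite Rabs_right by (apply Rle_ge, hf_nonneg).
      unfold hf. rewrite Rmult_1_l.
      assert (exp (- w * t) <= 1) by (rewrite <- exp_0; apply exp_mono; nra).
      assert (Rpower (1 + t) c <= 1) by (apply Rpower_le1; lra).
      pose proof (exp_pos (- w * t)). pose proof (Rpower_pos t (a - 1)). pose proof (Rpower_pos (1 + t) c).
      apply prod3_le; lra. }
    specialize (H Hle HI1 Hg).
    change (norm I1) with (Rabs I1) in H.
    pose proof (Rle_abs I1).
    rewrite Hba in H.
    assert (1 / a <= 2) by (apply Rdiv_le_of_le_mul; lra).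
    nra.
Qed.

Lemma hf_upper2 w a c t : 1 <= w -> / 2 <= a <= 2 -> c <= 0 -> / w <= t ->
  hf w a c t <= 2 * Rpower w (1 - a) * exp (- (w / 2) * t).
Proof.
  intros Hw Ha Hc Ht.
  assert (Hwt : 1 <= w * t).
  { assert (w * / w <= w * t) by (apply Rmult_le_compat_l; lra).
    rewrite Rinv_r in H by lra. lra. }
  assert (Htp : 0 < t) by (apply Rlt_le_trans with (/ w); [apply Rinv_0_lt_compat; lra|exact Ht]).
  unfold hf.
  assert (E1 : Rpower t (a - 1) = Rpower w (1 - a) * Rpower (w * t) (a - 1)).
  { rewrite <- Rpower_mult_distr by lra.
    rewrite <- Rmult_assoc, <- Rpower_plus.
    replace (1 - a + (a - 1)) with 0 by ring. rewrite Rpower_O by lra. ring. }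
  assert (E2 : Rpower (w * t) (a - 1) <= w * t).
  { rewrite <- (Rpower_1 (w * t)) at 2 by lra. apply Rle_Rpower; lra. }
  assert (E3 : w * t <= 2 * exp (w * t / 2)).
  { pose proof (exp_ineq1_le (w * t / 2)). lra. }
  assert (E4 : exp (- w * t) * exp (w * t / 2) = exp (- (w / 2) * t)).
  { rewrite <- exp_plus. f_equal. field. }
  assert (E5 : Rpower (1 + t) c <= 1) by (apply Rpower_le1; lra).
  pose proof (exp_pos (- w * t)). pose proof (Rpower_pos t (a - 1)).
  pose proof (Rpower_pos (1 + t) c). pose proof (Rpower_pos w (1 - a)).
  pose proof (Rpower_pos (w * t) (a - 1)).
  apply Rle_trans with (exp (- w * t) * Rpower t (a - 1)).
  { rewrite <- (Rmult_1_r (exp (- w * t) * Rpower t (a - 1))) at 2.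
    apply Rmult_le_compat_l; [|exact E5]. apply Rmult_le_pos; lra. }
  rewrite E1, <- E4.
  apply Rle_trans with (exp (- w * t) * (Rpower w (1 - a) * (2 * exp (w * t / 2)))).
  { apply Rmult_le_compat_l; [lra|]. apply Rmult_le_compat_l; [lra|]. lra. }
  right. ring.
Qed.

Lemma piece2 w a c : 1 <= w -> / 2 <= a <= 2 -> -4 <= c <= 0 ->
  exists I2, is_RInt_gen (hf w a c) (at_point (/ w)) (Rbar_locally p_infty) I2 /\
    0 <= I2 <= 4 * Rpower w (- a).
Proof.
  intros Hw Ha Hc.
  set (b := / w).
  assert (Hb : 0 < b) by (unfold b; apply Rinv_0_lt_compat; lra).
  set (D := fun x => b <= x).
  assert (HD1 : at_point b D) by (unfold at_point, D; lra).
  assert (HD2 : Rbar_locally p_infty D) by (exists b; intros x Hx; unfold D; lra).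
  assert (Hconv : forall x y, D x -> D y -> forall t, Rmin x y <= t <= Rmax x y -> D t).
  { unfold D. intros x y Hx Hy t Ht.
    assert (b <= Rmin x y) by (apply Rmin_glb; lra). lra. }
  set (K := 2 * Rpower w (1 - a)).
  assert (Hg : is_RInt_gen (fun t => K * exp (- (w / 2) * t)) (at_point b) (Rbar_locally p_infty)
                 (K / (w / 2) * exp (- (w / 2) * b))) by (apply G2; lra).
  assert (Hgc : forall t, continuous (fun t => K * exp (- (w / 2) * t)) t).
  { intro t. apply (ex_derive_continuous (K := R_AbsRing) (V := R_NormedModule)). auto_derive. exact I. }
  assert (Hle : forall t, D t -> hf w a c t <= K * exp (- (w / 2) * t)).
  { intros t Ht. unfold K. apply hf_upper2; unfold D, b in *; lra. }
  assert (Hex : ex_RInt_gen (hf w a c) (at_point b) (Rbar_locally p_infty)).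
  { apply (cmp_ex _ _ _ _ D (hf w a c) (fun t => K * exp (- (w / 2) * t)) (K / (w / 2) * exp (- (w / 2) * b)) HD1 HD2 Hconv).
    - intros x y Hx Hy. apply exRInt_pos; [apply hf_cont| unfold D in *; lra| unfold D in *; lra].
    - intros x y Hx Hy. apply (@ex_RInt_continuous R_CompleteNormedModule). intros; apply Hgc.
    - intros t Ht. rewrite Rabs_right by (apply Rle_ge, hf_nonneg). apply Hle. exact Ht.
    - exact Hg. }
  destruct Hex as [I2 HI2]. exists I2. split; [exact HI2|].
  assert (Hfilt : filter_prod (at_point b) (Rbar_locally p_infty) (fun ab : R * R => fst ab <= snd ab)).
  { apply (Filter_prod (at_point b) (Rbar_locally p_infty) _ (fun y => y = b) D (eq_refl b) HD2).
    intros x y Hx Hy. simpl. unfold D in Hy. lra. }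
  split.
  - pose proof (is_RInt_gen_scal (V := R_NormedModule) (hf w a c) 0 I2 HI2) as H0.
    pose proof (@RInt_gen_norm R_CompleteNormedModule (at_point b) (Rbar_locally p_infty) _ _
        (fun y => scal 0 (hf w a c y)) (hf w a c) (scal 0 I2) I2 Hfilt) as H.
    assert (Hle0 : filter_prod (at_point b) (Rbar_locally p_infty) (fun ab : R * R =>
        forall x, fst ab <= x <= snd ab -> norm (scal 0 (hf w a c x)) <= hf w a c x)).
    { apply (Filter_prod (at_point b) (Rbar_locally p_infty) _ (fun y => y = b) D (eq_refl b) HD2).
      intros x y Hx Hy t Ht.
      change (norm (scal 0 (hf w a c t))) with (Rabs (0 * hf w a c t)).
      rewrite Rmult_0_l, Rabs_R0. apply hf_nonneg. }
    specialize (H Hle0 H0 HI2).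
    change (norm (scal 0 I2)) with (Rabs (0 * I2)) in H.
    rewrite Rmult_0_l, Rabs_R0 in H. exact H.
  - pose proof (@RInt_gen_norm R_CompleteNormedModule (at_point b) (Rbar_locally p_infty) _ _
        (hf w a c) (fun t => K * exp (- (w / 2) * t)) I2 (K / (w / 2) * exp (- (w / 2) * b)) Hfilt) as H.
    assert (Hle1 : filter_prod (at_point b) (Rbar_locally p_infty) (fun ab : R * R =>
        forall x, fst ab <= x <= snd ab -> norm (hf w a c x) <= K * exp (- (w / 2) * x))).
    { apply (Filter_prod (at_point b) (Rbar_locally p_infty) _ (fun y => y = b) D (eq_refl b) HD2).
      intros x y Hx Hy t Ht. simpl in Ht. subst x.
      change (norm (hf w a c t)) with (Rabs (hf w a c t)).
      rewrite Rabs_right by (apply Rle_ge, hf_nonneg). apply Hle. unfold D. lra. }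
    specialize (H Hle1 HI2 Hg).
    change (norm I2) with (Rabs I2) in H. pose proof (Rle_abs I2).
    assert (EK : K / (w / 2) = 4 * Rpower w (- a)).
    { unfold K. replace (1 - a) with (1 + - a) by ring. rewrite Rpower_plus, Rpower_1 by lra.
      field. lra. }
    rewrite EK in H.
    assert (exp (- (w / 2) * b) <= 1).
    { rewrite <- exp_0. apply exp_mono. unfold b.
      assert (0 < w / 2 * / w) by (apply Rmult_lt_0_compat; [lra| apply Rinv_0_lt_compat; lra]). lra. }
    pose proof (Rpower_pos w (- a)). pose proof (exp_pos (- (w / 2) * b)).
    nra.
Qed.

Lemma hf_total w a c : 1 <= w -> / 2 <= a <= 2 -> -4 <= c <= 0 ->
  exists I, is_RInt_gen (hf w a c) (at_right 0) (Rbar_locally p_infty) I /\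
    / 96 * Rpower w (- a) <= I <= 6 * Rpower w (- a).
Proof.
  intros Hw Ha Hc.
  destruct (piece1 w a c Hw Ha Hc) as [I1 [H1 B1]].
  destruct (piece2 w a c Hw Ha Hc) as [I2 [H2 B2]].
  exists (I1 + I2). split.
  - exact (is_RInt_gen_Chasles (V := R_NormedModule) (hf w a c) (/ w) I1 I2 H1 H2).
  - lra.
Qed.

Lemma frac_bounds lo1 hi1 lo2 hi2 x y : 0 < lo1 <= x -> x <= hi1 -> 0 < lo2 <= y -> y <= hi2 ->
  lo1 / hi2 <= x / y <= hi1 / lo2.
Proof.
  intros H1 H2 H3 H4. split.
  - apply Rle_trans with (x / hi2).
    + apply Rmult_le_compat_r; [left; apply Rinv_0_lt_compat; lra| lra].
    + apply Rmult_le_compat_l; [lra|]. apply Rinv_le_contravar; lra.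
  - apply Rle_trans with (hi1 / y).
    + apply Rmult_le_compat_r; [left; apply Rinv_0_lt_compat; lra| lra].
    + apply Rmult_le_compat_l; [lra|]. apply Rinv_le_contravar; lra.
Qed.

Theorem corollary4p10 :
  forall n : nat, (2 <= n)%nat ->
  exists C : R, 0 < C /\
  forall (j : nat) (lam : R), (1 <= j)%nat ->
    lam >= (INR n - 1) * INR j / 2 ->
    let alpha := 1 - 1 / INR n in
    let beta := / 2 * (1 - 1 / INR n) - lam / (INR j * INR n) in
    alpha - beta - 1 <= 1 ->
    forall z : R, 1 <= z ->
      let w := INR j * z ^ n in
      let G := exp (w / 2) * kummerM beta alpha (- w) in
      let D := exp (w / 2) * tricomiT beta alpha (- w) in
      / C * exp (- w / 2) * Rpower w (beta - alpha) <= D /\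
      D <= C * exp (- w / 2) * Rpower w (beta - alpha) /\
      / C * exp (w / 2) * Rpower w (- beta) <= G /\
      G <= C * exp (w / 2) * Rpower w (- beta).
Proof.
  intros n Hn. exists 1000. split; [lra|].
  intros j lam Hj Hlam alpha beta Hab z Hz w G D.
  assert (Hn2 : 2 <= INR n) by (change 2 with (INR 2); apply le_INR; exact Hn).
  assert (Hj1 : 1 <= INR j) by (change 1 with (INR 1); apply le_INR; exact Hj).
  assert (Hal : / 2 <= alpha <= 1).
  { unfold alpha. assert (0 < 1 / INR n <= / 2).
    { split; [apply Rdiv_lt_0_compat; lra|]. unfold Rdiv. rewrite Rmult_1_l. apply Rinv_le_contravar; lra. }
    lra. }
  assert (Hbeta : beta <= 0).
  { unfold beta.
    assert (lam / (INR j * INR n) >= (INR n - 1) * INR j / 2 / (INR j * INR n)).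
    { unfold Rdiv. apply Rle_ge. apply Rmult_le_compat_r.
      - left. apply Rinv_0_lt_compat. nra.
      - lra. }
    assert (E : (INR n - 1) * INR j / 2 / (INR j * INR n) = / 2 * (1 - 1 / INR n)) by (field; lra).
    lra. }
  set (s := - beta).
  assert (Hs : 0 <= s <= 3 / 2) by (unfold s; lra).
  assert (Ha2 : alpha + s <= 2) by (unfold s; lra).
  assert (Hw : 1 <= w).
  { unfold w. pose proof (pow_R1_Rle z n Hz). nra. }
  assert (Hexp : exp (w / 2) * exp (- w) = exp (- w / 2)).
  { rewrite <- exp_plus. f_equal. field. }
  destruct (M_bounds alpha s w (proj1 Hal) Hs Ha2 Hw) as [L [HL [BL1 BL2]]].
  assert (HK : is_series (fun k => poch beta k / poch alpha k * ((- w) ^ k / INR (fact k))) (exp (- w) * L)).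
  { apply kummer.
    - lra.
    - intros y Hy. replace (alpha - beta) with (alpha + s) by (unfold s; ring). apply pr_ex; lra.
    - replace (alpha - beta) with (alpha + s) by (unfold s; ring). exact HL. }
  assert (HG : G = exp (- w / 2) * L).
  { unfold G, kummerM. rewrite (is_series_unique _ _ HK). rewrite <- Hexp. ring. }
  assert (HE2 : exp (- w / 2) * exp w = exp (w / 2)).
  { rewrite <- exp_plus. f_equal. field. }
  destruct (hf_total w (alpha - beta) (beta - 1) Hw ltac:(lra) ltac:(lra)) as [I0 [HI BI]].
  destruct (hf_total 1 (alpha - beta) 0 ltac:(lra) ltac:(lra) ltac:(lra)) as [Ig [HIg BIg]].
  rewrite Rpower_1_base in BIg.
  assert (HGam : Gamma (alpha - beta) = Ig).
  { unfold Gamma. apply is_RInt_gen_unique. eapply is_RInt_gen_ext; [|exact HIg].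
    apply (Filter_prod _ _ _ (fun _ => True) (fun _ => True)); try exact filter_true.
    intros x y _ _ t _. unfold hf.
    match goal with |- ?x = ?y => change (@eq R x y) end.
    rewrite Ropp_mult_distr_l_reverse, Rmult_1_l.
    assert (E0 : Rpower (1 + t) 0 = 1) by (unfold Rpower; rewrite Rmult_0_l; apply exp_0).
    rewrite E0. ring. }
  assert (HT : RInt_gen (fun t => exp (- w * t) * Rpower t (alpha - beta - 1) * Rpower (1 + t) (beta - 1))
                 (at_right 0) (Rbar_locally p_infty) = I0).
  { apply is_RInt_gen_unique. exact HI. }
  assert (HD : D = exp (- w / 2) * (I0 / Ig)).
  { unfold D, tricomiT. rewrite HGam, HT. rewrite <- Hexp. field. lra. }
  set (W := Rpower w (- (alpha - beta))) in *.
  assert (HW : Rpower w (beta - alpha) = W) by (unfold W; f_equal; ring).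
  rewrite HW.
  assert (HWp : 0 < W) by apply Rpower_pos.
  assert (Hsb : Rpower w (- beta) = Rpower w s) by reflexivity.
  rewrite HG, HD.
  pose proof (frac_bounds (/ 96 * W) (6 * W) (/ 96) 6 I0 Ig ltac:(lra) ltac:(lra) ltac:(lra) ltac:(lra)) as [F1 F2].
  pose proof (exp_pos (- w / 2)) as Ep. pose proof (exp_pos w) as Ew.
  pose proof (Rpower_pos w s) as Ps.
  split; [|split; [|split]].
  - assert (E : / 96 * W / 6 = W / 576) by field. rewrite E in F1.
    replace (/ 1000 * exp (- w / 2) * W) with (exp (- w / 2) * (/ 1000 * W)) by ring.
    apply Rmult_le_compat_l; [lra|]. lra.
  - assert (E : 6 * W / / 96 = 576 * W) by field. rewrite E in F2.
    replace (1000 * exp (- w / 2) * W) with (exp (- w / 2) * (1000 * W)) by ring.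
    apply Rmult_le_compat_l; lra.
  - rewrite <- HE2.
    replace (/ 1000 * (exp (- w / 2) * exp w) * Rpower w s) with (exp (- w / 2) * (/ 1000 * Rpower w s * exp w)) by ring.
    apply Rmult_le_compat_l; [lra|]. nra.
  - rewrite <- HE2.
    replace (1000 * (exp (- w / 2) * exp w) * Rpower w s) with (exp (- w / 2) * (1000 * Rpower w s * exp w)) by ring.
    apply Rmult_le_compat_l; [lra|]. nra.
Qed.
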